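(* In the supersample setting described in the context, assume the loss takes values in $\{0,1\}$ and let $\gamma\in(0,1)$. For any $C_1>0$, \[ \mathrm{Err}-C_1V(\gamma)\leq\frac{2+C_1\gamma^2}{n}\sum_{i=1}^n\mathbb E_{L^+_{i},\tilde{\varepsilon}_i}\left[\tilde{\varepsilon}_iL^+_{i}\right], \] where $\tilde{\varepsilon}_i=(-1)^{1-U_i}-\frac{C_1\gamma^2}{C_1\gamma^2+2}$ (a shifted Rademacher variable with mean $-\frac{C_1\gamma^2}{C_1\gamma^2+2}$).
   Context: Let $\mathcal Z=\mathcal X\times\mathcal Y$ and let $\mu$ be a distribution on $\mathcal Z$. A (possibly randomized) learning algorithm $\mathcal A$ maps a training sample in $\mathcal Z^n$ to a hypothesis $W\in\mathcal W$, and $\ell:\mathcal W\times\mathcal Z\to\{0,1\}$ is a loss. For $S=(Z_1,\dots,Z_n)\sim\mu^{n}$ and $W\sim P_{W|S}$, let $L_\mu=\mathbb E_W\mathbb E_{Z'\sim\mu}[\ell(W,Z')]$ (with $Z'$ independent of $(S,W)$), $L_S(w)=\frac1n\sum_i\ell(w,Z_i)$, $L_n=\mathbb E_{W,S}[L_S(W)]$ and $\mathrm{Err}=L_\mu-L_n$. The $\gamma$-variance is $V(\gamma)=\mathbb E_{W,S}\big[\frac1n\sum_{i=1}^n(\ell(W,Z_i)-(1+\gamma)L_S(W))^2\big]$. Supersample: $\widetilde Z=(\widetilde Z_{i,j})_{i\in\{1,\dots,n\},j\in\{0,1\}}$ with i.i.d. entries of law $\mu$; $U=(U_1,\dots,U_n)$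 uniform on $\{0,1\}^n$, independent of $\widetilde Z$; $W=\mathcal A(\widetilde Z_U)$ with $\widetilde Z_U=(\widetilde Z_{1,U_1},\dots,\widetilde Z_{n,U_n})$; $L_i^+=\ell(W,\widetilde Z_{i,0})$. *)

(* Defs.v *)
From HB Require Import structures.
From mathcomp Require Import all_boot all_order all_algebra.
From mathcomp Require Import all_classical all_reals all_analysis.
Set Implicit Arguments. Unset Strict Implicit. Unset Printing Implicit Defensive.
Import Order.TTheory GRing.Theory Num.Theory.
Local Open Scope classical_set_scope.
Local Open Scope ring_scope.

Definition preimg_sigma {dO dT : measure_display} {Omega : measurableType dO}
  {T : measurableType dT} (X : Omega -> T) : set (set Omega) :=
  [set E | exists2 B : set T, measurable B & E = X @^-1` B].

Definition mutually_independent {dO : measure_display} {Omega : measurableType dO}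
  {R : realType} (P : probability Omega R) (I : finType)
  (G : I -> set (set Omega)) : Prop :=
  forall (J : {set I}) (E : I -> set Omega),
    (forall k, k \in J -> G k (E k)) ->
    P (\bigcap_(k in [set k | k \in J]) E k) = (\prod_(k in J) P (E k))%E.

(** index type of the supersample random elements:
    inl (inl (i, j)) : Ztilde_{i,j};  inl (inr i) : U_i;
    inr true : internal randomness xi of the algorithm;
    inr false : fresh test point Z'. *)
Definition ss_index (n : nat) : finType := ((('I_n * bool) + 'I_n) + bool)%type.

Section Supersample.
Context {R : realType} {dO dZ dW dX : measure_display}
  {Omega : measurableType dO} {Z : measurableType dZ}
  {W : measurableType dW} {Xi : measurableType dX}.
Variable (P : probability Omega R) (n : nat).
Variable (A : n.-tuple Z -> Xi -> W) (loss : W -> Z -> R).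
Variable (Zt : 'I_n -> bool -> Omega -> Z) (U : 'I_n -> Omega -> bool)
  (xi : Omega -> Xi) (Zp : Omega -> Z).

Definition ss_sigma (k : ss_index n) : set (set Omega) :=
  match k with
  | inl (inl (i, j)) => preimg_sigma (Zt i j)
  | inl (inr i) => preimg_sigma (U i)
  | inr true => preimg_sigma xi
  | inr false => preimg_sigma Zp
  end.

(** expectation (all integrands below are bounded) *)
Definition Ex (f : Omega -> R) : R := Rintegral P setT f.

(** training sample S = Ztilde_U  (U_i = true means U_i = 1) *)
Definition train (w : Omega) : n.-tuple Z := [tuple Zt i (U i w) w | i < n].
Definition hyp (w : Omega) : W := A (train w) (xi w).
Definition emp_risk (h : W) (s : n.-tuple Z) : R :=
  n%:R^-1 * \sum_(i < n) loss h (tnth s i).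
Definition L_mu : R := Ex (fun w => loss (hyp w) (Zp w)).
Definition L_n : R := Ex (fun w => emp_risk (hyp w) (train w)).
Definition Err : R := L_mu - L_n.
Definition Vgamma (gamma : R) : R :=
  Ex (fun w => n%:R^-1 * \sum_(i < n)
        (loss (hyp w) (tnth (train w) i)
         - (1 + gamma) * emp_risk (hyp w) (train w)) ^+ 2).
Definition Lplus (i : 'I_n) (w : Omega) : R := loss (hyp w) (Zt i false w).
Definition eps_shift (C1 gamma : R) (i : 'I_n) (w : Omega) : R :=
  (if U i w then 1 else -1) - C1 * gamma ^+ 2 / (C1 * gamma ^+ 2 + 2).
End Supersample.

(* Main.v *)
Require Import Defs.
From HB Require Import structures.
From mathcomp Require Import all_boot all_order all_algebra.
From mathcomp Require Import all_classical all_reals all_analysis.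
From mathcomp Require Import measurable_realfun.
From mathcomp Require Import ring lra.
Import Order.TTheory GRing.Theory Num.Theory.
Local Open Scope classical_set_scope.
Local Open Scope ring_scope.

Lemma law_unique (R : realType) d d' (Omega : measurableType d) (T : measurableType d')
  (P : probability Omega R)
  (X X' : Omega -> T) (mX : measurable_fun setT X) (mX' : measurable_fun setT X')
  (G : set (set T)) (mG : measurable = <<s G >>) (setIG : setI_closed G) (GT : G setT)
  (h : forall A, G A -> P (X @^-1` A) = P (X' @^-1` A)) :
  forall A, measurable A -> P (X @^-1` A) = P (X' @^-1` A).
Proof.
move=> A mA.
have := @measure_unique d' R T G (fun=> setT) mG setIG (fun=> GT) _ (pushforward P X) (pushforward P X').
apply=> //.
- by rewrite bigcup_const.
- move=> _; change ((P (X @^-1` setT) < +oo)%E).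
  by rewrite (_ : X @^-1` _ = setT) ?probability_setT ?ltry.
Qed.

Lemma law_int (R : realType) d d' (Omega : measurableType d) (T : measurableType d')
  (P : probability Omega R)
  (X X' : Omega -> T) (mX : measurable_fun setT X) (mX' : measurable_fun setT X')
  (hl : forall A, measurable A -> P (X @^-1` A) = P (X' @^-1` A))
  (f : T -> R) (mf : measurable_fun setT f) (f0 : forall y, 0 <= f y) :
  Rintegral P setT (f \o X) = Rintegral P setT (f \o X').
Proof.
rewrite /Rintegral; congr fine.
have mf' : measurable_fun setT (fun y => (f y)%:E) by apply/measurable_EFinP.
have f0' : {in setT, forall y, (0 <= (EFin \o f) y)%E} by move=> y _; rewrite lee_fin.
have e1 := ge0_integral_pushforward mX P measurableT mf' f0'.
have e2 := ge0_integral_pushforward mX' P measurableT mf' f0'.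
rewrite !preimage_setT in e1 e2.
rewrite -[LHS]/(\int[P]_(x in setT) ((EFin \o f) \o X) x)%E -e1.
rewrite -[RHS]/(\int[P]_(x in setT) ((EFin \o f) \o X') x)%E -e2.
by apply: eq_measure_integral => A mA _; exact: hl.
Qed.

Lemma var_alg (R : realType) (n : nat) (l : 'I_n -> R) (g : R) : (0 < n)%N ->
  (forall k, l k ^+ 2 = l k) ->
  n%:R^-1 * \sum_(k < n) (l k - (1 + g) * (n%:R^-1 * \sum_(k < n) l k)) ^+ 2 =
  n%:R^-1 * \sum_(k < n) l k + (g ^+ 2 - 1) * (n%:R^-1 * \sum_(k < n) l k) ^+ 2.
Proof.
move=> n0 hl.
set e := n%:R^-1 * \sum_(k < n) l k.
have nz : n%:R != 0 :> R by rewrite pnatr_eq0 -lt0n.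
have hS : \sum_(k < n) l k = n%:R * e by rewrite /e mulrA mulfV // mul1r.
have hs : \sum_(k < n) (l k - (1 + g) * e) ^+ 2 =
    \sum_(k < n) l k - 2 * (1 + g) * e * \sum_(k < n) l k + n%:R * ((1 + g) * e) ^+ 2.
  rewrite (eq_bigr (fun k => l k - 2 * (1 + g) * e * l k + ((1 + g) * e) ^+ 2)); last first.
    move=> k _; transitivity (l k ^+ 2 - 2 * (1 + g) * e * l k + ((1 + g) * e) ^+ 2).
      by ring.
    by rewrite hl.
  rewrite big_split /= sumrB mulr_sumr sumr_const card_ord.
  by congr (_ + _); rewrite mulr_natl.
rewrite hs hS.
by field.
Qed.

Lemma var_ge (R : realType) (e g : R) : 0 <= e <= 1 -> 0 < g < 1 ->
  g ^+ 2 * e <= e + (g ^+ 2 - 1) * e ^+ 2.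
Proof.
move=> /andP[e0 e1] /andP[g0 g1].
have h1 : 0 <= 1 - g ^+ 2 by rewrite subr_ge0 expr_le1 ?ltW.
have h2 : 0 <= e * (1 - e) by rewrite mulr_ge0 // subr_ge0.
have := mulr_ge0 h1 h2.
nra.
Qed.

Section Main.
Context (R : realType) (dO dZ dW dX : measure_display)
  (Omega : measurableType dO) (Z : measurableType dZ)
  (W : measurableType dW) (Xi : measurableType dX)
  (P : probability Omega R) (n : nat) (mu : probability Z R)
  (A : n.-tuple Z -> Xi -> W) (loss : W -> Z -> R)
  (Zt : 'I_n -> bool -> Omega -> Z) (U : 'I_n -> Omega -> bool)
  (xi : Omega -> Xi) (Zp : Omega -> Z).
Hypothesis mloss : measurable_fun setT (fun p : W * Z => loss p.1 p.2).
Hypothesis mA : measurable_fun setT (fun p : n.-tuple Z * Xi => A p.1 p.2).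
Hypothesis mZt : forall i j, measurable_fun setT (Zt i j).
Hypothesis mU : forall i, measurable_fun setT (U i).
Hypothesis mxi : measurable_fun setT xi.
Hypothesis mZp : measurable_fun setT Zp.
Hypothesis lawZt : forall i j B, measurable B -> P (Zt i j @^-1` B) = mu B.
Hypothesis lawZp : forall B, measurable B -> P (Zp @^-1` B) = mu B.
Hypothesis lawU : forall i b, P (U i @^-1` [set b]) = (2^-1)%:E.
Hypothesis loss01 : forall h z, loss h z = 0 \/ loss h z = 1.
Hypothesis indep : mutually_independent P (ss_sigma Zt U xi Zp).

Definition T0 := (('I_n -> bool -> Z) * ('I_n -> bool) * Xi * Z)%type.

Definition rect (B : 'I_n -> bool -> set Z) (b : 'I_n -> set bool) (C : set Xi)
  (D : set Z) : set T0 :=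
  [set y | (forall i j, B i j (y.1.1.1 i j)) /\ (forall i, b i (y.1.1.2 i))
           /\ C y.1.2 /\ D y.2].

Definition mrect (B : 'I_n -> bool -> set Z) (b : 'I_n -> set bool) (C : set Xi)
  (D : set Z) : Prop :=
  (forall i j, measurable (B i j)) /\ (forall i, measurable (b i))
  /\ measurable C /\ measurable D.

Definition Rects : set (set T0) :=
  [set S | exists B b C D, mrect B b C D /\ S = rect B b C D].

Definition TT := g_sigma_algebraType Rects.

Lemma Rects_setI : setI_closed Rects.
Proof.
move=> S1 S2 [B1 [b1 [C1 [D1 [[m1 [m2 [m3 m4]]] ->]]]]]
  [B2 [b2 [C2 [D2 [[m1' [m2' [m3' m4']]] ->]]]]].
exists (fun i j => B1 i j `&` B2 i j), (fun i => b1 i `&` b2 i), (C1 `&` C2), (D1 `&` D2).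
split; first by split; [|split; [|split]] => *; apply: measurableI.
apply/seteqP; split => y /=.
  move=> [[h1 [h2 [h3 h4]]] [h1' [h2' [h3' h4']]]].
  split; first by move=> i j; split; [exact: h1|exact: h1'].
  split; first by move=> i; split; [exact: h2|exact: h2'].
  by split; split.
move=> [h1 [h2 [[h3 h3'] [h4 h4']]]].
split; (split; [|split; [|split]]) => //.
- by move=> i j; case: (h1 i j).
- by move=> i; case: (h2 i).
- by move=> i j; case: (h1 i j).
- by move=> i; case: (h2 i).
Qed.

Lemma Rects_setT : Rects setT.
Proof.
exists (fun _ _ => setT), (fun _ => setT), setT, setT; split.
  by split; [move=> *; exact: measurableT|split; [move=> *; exact: measurableT|split; exact: measurableT]].
by apply/seteqP; split => y //=.
Qed.

Lemma rect_meas B b C D : mrect B b C D -> measurable (rect B b C D : set TT).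
Proof. by move=> h; apply: sub_sigma_algebra; exists B, b, C, D. Qed.

Definition mkX (w : Omega) : TT :=
  ((fun i j => Zt i j w, fun i => U i w), xi w, Zp w).

Definition Ev B b C D (k : ss_index n) : set Omega :=
  match k with
  | inl (inl (i, j)) => Zt i j @^-1` B i j
  | inl (inr i) => U i @^-1` b i
  | inr true => xi @^-1` C
  | inr false => Zp @^-1` D
  end.

Lemma preX_rect B b C D :
  mkX @^-1` rect B b C D = \bigcap_(k in [set k | k \in [set: ss_index n]%SET]) Ev B b C D k.
Proof.
apply/seteqP; split => w /=.
  by move=> [h1 [h2 [h3 h4]]] [[[i j]|i]|[]] _ /=.
move=> h; split; [|split; [|split]].
- by move=> i j; exact: (h (inl (inl (i, j))) (finset.in_setT _)).
- by move=> i; exact: (h (inl (inr i)) (finset.in_setT _)).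
- exact: (h (inr true) (finset.in_setT _)).
- exact: (h (inr false) (finset.in_setT _)).
Qed.

Lemma mEv B b C D k : mrect B b C D -> measurable (Ev B b C D k).
Proof.
move=> [m1 [m2 [m3 m4]]]; case: k => [[[i j]|i]|[]] /=.
- by rewrite -[X in measurable X]setTI; apply: mZt.
- by rewrite -[X in measurable X]setTI; apply: mU.
- by rewrite -[X in measurable X]setTI; apply: mxi.
- by rewrite -[X in measurable X]setTI; apply: mZp.
Qed.

Lemma mkX_meas : measurable_fun setT mkX.
Proof.
apply: (@measurability _ _ _ TT setT mkX Rects) => //.
move=> S [S' [B [b [C [D [hm ->]]]]] <-].
rewrite setTI preX_rect.
apply: fin_bigcap_measurable; first exact: finite_finset.
by move=> k _; exact: mEv.
Qed.

Lemma prob_rect B b C D : mrect B b C D ->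
  P (mkX @^-1` rect B b C D) = (\prod_(k in [set: ss_index n]%SET) P (Ev B b C D k))%E.
Proof.
move=> hm; rewrite preX_rect; apply: (indep [set: ss_index n]%SET) => -[[[i j]|i]|[]] _ /=.
- by exists (B i j) => //; case: hm.
- by exists (b i) => //; case: hm => _ [].
- by exists C => //; case: hm => _ [_ []].
- by exists D => //; case: hm => _ [_ [_]].
Qed.


Lemma law_T (T : TT -> TT) (pi : ss_index n -> ss_index n) (injpi : injective pi)
  (hT : forall B b C D, mrect B b C D -> exists B' b' C' D', mrect B' b' C' D' /\
     T @^-1` rect B b C D = rect B' b' C' D' /\
     forall k, P (Ev B' b' C' D' k) = P (Ev B b C D (pi k))) :
  measurable_fun setT T /\
  forall S, measurable S -> P (mkX @^-1` S) = P ((T \o mkX) @^-1` S).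
Proof.
have mT : measurable_fun setT T.
  apply: (@measurability _ _ TT TT setT T Rects) => //.
  move=> S [S' [B [b [C [D [hm ->]]]]] <-].
  have [B' [b' [C' [D' [hm' [-> _]]]]]] := hT _ _ _ _ hm.
  by rewrite setTI; exact: rect_meas.
split => //.
apply: law_unique => //.
- exact: mkX_meas.
- exact: measurableT_comp mT mkX_meas.
- exact: Rects_setI.
- exact: Rects_setT.
move=> S [B [b [C [D [hm ->]]]]].
have [B' [b' [C' [D' [hm' [e hk]]]]]] := hT _ _ _ _ hm.
rewrite comp_preimage e !prob_rect //.
rewrite (reindex_inj injpi) /=.
apply: eq_big => [k|k _]; first by rewrite !finset.in_setT.
by rewrite hk.
Qed.

Lemma mbool (S : set bool) : measurable S.
Proof. by []. Qed.

Lemma Uflip k (S : set bool) : P (U k @^-1` [set u | S (~~ u)]) = P (U k @^-1` S).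
Proof.
have [h|h] := pselect (S true <-> S false).
  congr (P _); apply/seteqP; split => w /=; case: (U k w) => /=; by case: h.
have [St|Snt] := pselect (S true).
  have Sf : ~ S false by move=> Sf; apply: h.
  have e1 : U k @^-1` S = U k @^-1` [set true].
    by apply/seteqP; split => w /=; case: (U k w) => //=.
  have e2 : U k @^-1` [set u | S (~~ u)] = U k @^-1` [set false].
    by apply/seteqP; split => w /=; case: (U k w) => //=.
  by rewrite e1 e2 !lawU.
have Sf : S false by apply: contrapT => Sf; apply: h; split.
have e1 : U k @^-1` S = U k @^-1` [set false].
  by apply/seteqP; split => w /=; case: (U k w) => //=.
have e2 : U k @^-1` [set u | S (~~ u)] = U k @^-1` [set true].
  by apply/seteqP; split => w /=; case: (U k w) => //=.
by rewrite e1 e2 !lawU.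
Qed.

Definition swU (i : 'I_n) (y : TT) : TT :=
  ((fun k j => if k == i then y.1.1.1 k (~~ j) else y.1.1.1 k j,
    fun k => if k == i then ~~ y.1.1.2 k else y.1.1.2 k), y.1.2, y.2).

Definition pi_sw (i : 'I_n) (k : ss_index n) : ss_index n :=
  match k with
  | inl (inl (k', j)) => if k' == i then inl (inl (k', ~~ j)) else k
  | _ => k
  end.

Lemma pi_swK i : involutive (pi_sw i).
Proof.
move=> [[[k j]|k]|[]] //=; case: eqP => [->|] /=; first by rewrite eqxx negbK.
by move=> /eqP/negbTE ->.
Qed.

Lemma law_swU i : measurable_fun setT (swU i) /\
  forall S, measurable S -> P (mkX @^-1` S) = P ((swU i \o mkX) @^-1` S).
Proof.
apply: (@law_T (swU i) (pi_sw i) (inv_inj (@pi_swK i))).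
move=> B b C D [m1 [m2 [m3 m4]]].
exists (fun k j => if k == i then B k (~~ j) else B k j),
  (fun k => if k == i then [set u | b k (~~ u)] else b k), C, D.
split.
  split; first by move=> k j; case: (k == i).
  split; first by move=> k; exact: mbool.
  by split.
split.
  apply/seteqP; split => y; rewrite /preimage /rect /= => -[h1 [h2 [h3 h4]]]; (split; [|split; [|by split]]).
  - move=> k j; case: (eqVneq k i) => [->|ne].
      by have := h1 i (~~ j); rewrite eqxx negbK.
    by have := h1 k j; rewrite (negbTE ne).
  - move=> k; case: (eqVneq k i) => [->|ne] /=.
      by have := h2 i; rewrite eqxx.
    by have := h2 k; rewrite (negbTE ne).
  - move=> k j; case: (eqVneq k i) => [->|ne].
      by have := h1 i (~~ j); rewrite eqxx negbK.
    by have := h1 k j; rewrite (negbTE ne).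
  - move=> k; case: (eqVneq k i) => [->|ne] /=.
      by have := h2 i; rewrite eqxx.
    by have := h2 k; rewrite (negbTE ne).
move=> [[[k j]|k]|[]] //=.
- case: eqP => [->|_] /=; by rewrite !lawZt.
- case: eqP => [->|_] //=; exact: Uflip.
Qed.

Definition tau (i : 'I_n) (y : TT) : TT :=
  ((fun k j => if (k == i) && ~~ j then y.2 else y.1.1.1 k j, y.1.1.2),
   y.1.2, y.1.1.1 i false).

Definition pi_tau (i : 'I_n) (k : ss_index n) : ss_index n :=
  match k with
  | inl (inl (k', j)) => if (k' == i) && ~~ j then inr false else k
  | inr false => inl (inl (i, false))
  | _ => k
  end.

Lemma pi_tauK i : involutive (pi_tau i).
Proof.
move=> [[[k j]|k]|[]] //=; last by rewrite eqxx.
case: (eqVneq k i) => [->|ne] /=; first by case: j => //=; rewrite eqxx.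
by rewrite (negbTE ne).
Qed.

Lemma law_tau i : measurable_fun setT (tau i) /\
  forall S, measurable S -> P (mkX @^-1` S) = P ((tau i \o mkX) @^-1` S).
Proof.
apply: (@law_T (tau i) (pi_tau i) (inv_inj (@pi_tauK i))).
move=> B b C D [m1 [m2 [m3 m4]]].
exists (fun k j => if (k == i) && ~~ j then D else B k j), b, C, (B i false).
split.
  split; first by move=> k j; case: (_ && _).
  by split.
split.
  apply/seteqP; split => y; rewrite /preimage /rect /= => -[h1 [h2 [h3 h4]]].
    split; last by split => //; split => //; have := h1 i false; rewrite eqxx.
    move=> k j; case: (eqVneq k i) => [->|ne] /=.
      by case: j => //=; have := h1 i true; rewrite eqxx.
    by have := h1 k j; rewrite (negbTE ne).
  split; last by split => //; split => //; have := h1 i false; rewrite eqxx.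
  move=> k j; case: (eqVneq k i) => [->|ne] /=.
    by case: j => //=; have := h1 i true; rewrite eqxx.
  by have := h1 k j; rewrite (negbTE ne).
move=> [[[k j]|k]|[]] //=.
- case: eqP => [->|_] /=; last by [].
  by case: j => //=; rewrite lawZt // lawZp.
- by rewrite lawZp // lawZt.
Qed.

Lemma m_Zt k j : measurable_fun setT (fun y : TT => y.1.1.1 k j).
Proof.
move=> _ S mS; rewrite setTI.
have -> : (fun y : TT => y.1.1.1 k j) @^-1` S =
  rect (fun k' j' => if (k' == k) && (j' == j) then S else setT) (fun=> setT) setT setT.
  apply/seteqP; split => y; rewrite /preimage /rect /=.
    move=> h; split; last by split.
    by move=> k' j'; case: andP => // -[/eqP -> /eqP ->].
  by move=> [h _]; have := h k j; rewrite !eqxx.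
apply: rect_meas; split; last by split => //; split; exact: measurableT.
by move=> k' j'; case: (_ && _) => //; exact: measurableT.
Qed.

Lemma m_U k : measurable_fun setT (fun y : TT => y.1.1.2 k).
Proof.
move=> _ S mS; rewrite setTI.
have -> : (fun y : TT => y.1.1.2 k) @^-1` S =
  rect (fun _ _ => setT) (fun k' => if k' == k then S else setT) setT setT.
  apply/seteqP; split => y; rewrite /preimage /rect /=.
    move=> h; split => //; split; last by split.
    by move=> k'; case: eqP => // ->.
  by move=> [_ [h _]]; have := h k; rewrite !eqxx.
apply: rect_meas; split; first by move=> *; exact: measurableT.
by split => //; split; exact: measurableT.
Qed.

Lemma m_xi : measurable_fun setT (fun y : TT => y.1.2).
Proof.
move=> _ S mS; rewrite setTI.
have -> : (fun y : TT => y.1.2) @^-1` S = rect (fun _ _ => setT) (fun _ => setT) S setT.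
  apply/seteqP; split => y; rewrite /preimage /rect /=.
    by move=> h; split => //.
  by move=> [_ [_ [h _]]].
apply: rect_meas; split; first by move=> *; exact: measurableT.
by split => //; split => //; exact: measurableT.
Qed.

Lemma m_zp : measurable_fun setT (fun y : TT => y.2).
Proof.
move=> _ S mS; rewrite setTI.
have -> : (fun y : TT => y.2) @^-1` S = rect (fun _ _ => setT) (fun _ => setT) setT S.
  apply/seteqP; split => y; rewrite /preimage /rect /=.
    by move=> h; split => //.
  by move=> [_ [_ [_ h]]].
apply: rect_meas; split; first by move=> *; exact: measurableT.
by split => //; split => //; exact: measurableT.
Qed.

Definition trT (y : TT) : n.-tuple Z := [tuple y.1.1.1 k (y.1.1.2 k) | k < n].
Definition hyT (y : TT) : W := A (trT y) y.1.2.
Definition lT (y : TT) (z : Z) : R := loss (hyT y) z.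

Lemma m_trk k : measurable_fun setT (fun y : TT => y.1.1.1 k (y.1.1.2 k)).
Proof.
rewrite (_ : (fun y : TT => _) =
  (fun y : TT => if y.1.1.2 k then y.1.1.1 k true else y.1.1.1 k false)).
  by apply: measurable_fun_ifT; [exact: m_U|exact: m_Zt|exact: m_Zt].
by apply/funext => y; case: (y.1.1.2 k).
Qed.

Lemma m_tr : measurable_fun setT trT.
Proof.
apply/measurable_fun_tnthP => k.
rewrite (_ : _ \o _ = (fun y : TT => y.1.1.1 k (y.1.1.2 k))); first exact: m_trk.
by apply/funext => y /=; rewrite tnth_mktuple.
Qed.

Lemma m_hy : measurable_fun setT hyT.
Proof.
exact: (measurableT_comp mA (measurable_fun_pair m_tr m_xi)).
Qed.

Lemma m_l (g : TT -> Z) : measurable_fun setT g ->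
  measurable_fun setT (fun y => lT y (g y)).
Proof. by move=> mg; exact: (measurableT_comp mloss (measurable_fun_pair m_hy mg)). Qed.

Definition good (f : Omega -> R) :=
  measurable_fun setT f /\ exists M : R, forall w, `|f w| <= M.

Lemma good_int f : good f -> P.-integrable setT (EFin \o f).
Proof.
move=> [mf [M hM]]; apply: measurable_bounded_integrable => //.
  by move: (probability_setT P) => /= ->; exact: ltry.
exists M; split; first by rewrite num_real.
by move=> x Mx y _; apply: le_trans (hM y) (ltW Mx).
Qed.

Lemma goodD f g : good f -> good g -> good (fun w => f w + g w).
Proof.
move=> [mf [M hM]] [mg [N hN]]; split; first exact: measurable_funD.
by exists (M + N) => w; apply: le_trans (ler_normD _ _) _; apply: lerD.
Qed.

Lemma goodZ (c : R) f : good f -> good (fun w => c * f w).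
Proof.
move=> [mf [M hM]]; split; first exact: measurable_funM.
by exists (`|c| * M) => w; rewrite normrM; apply: ler_wpM2l.
Qed.

Lemma goodS (I : Type) (s : seq I) (F : I -> Omega -> R) :
  (forall k, good (F k)) -> good (fun w => \sum_(k <- s) F k w).
Proof.
move=> hF; elim: s => [|x s [ih1 ih2]].
  split; last by exists 0 => w; rewrite big_nil normr0.
  by rewrite (_ : (fun _ => _) = cst 0); [exact: measurable_cst|apply/funext => w; rewrite big_nil].
rewrite (_ : (fun w => \sum_(k <- x :: s) F k w) = (fun w => F x w + \sum_(k <- s) F k w)).
  by apply: goodD => //; split.
by apply/funext => w; rewrite big_cons.
Qed.

Lemma ExD f g : good f -> good g ->
  Ex P (fun w => f w + g w) = Ex P f + Ex P g.
Proof. by move=> hf hg; rewrite /Ex RintegralD //; exact: good_int. Qed.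

Lemma ExZ (c : R) f : good f -> Ex P (fun w => c * f w) = c * Ex P f.
Proof. by move=> hf; rewrite /Ex RintegralZl //; exact: good_int. Qed.

Lemma ExS (I : Type) (s : seq I) (F : I -> Omega -> R) :
  (forall k, good (F k)) ->
  Ex P (fun w => \sum_(k <- s) F k w) = \sum_(k <- s) Ex P (F k).
Proof.
move=> hF; elim: s => [|x s ih].
  rewrite big_nil /Ex (_ : (fun _ => _) = cst 0); last by apply/funext => w; rewrite big_nil.
  by rewrite /Rintegral integral0.
rewrite big_cons -ih -ExD //; last exact: goodS.
by congr (Ex P _); apply/funext => w; rewrite big_cons.
Qed.

Lemma Ex_le f g : good f -> good g -> (forall w, f w <= g w) -> Ex P f <= Ex P g.
Proof. by move=> hf hg h; apply: le_Rintegral => //; exact: good_int. Qed.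

Lemma Ex_ext f g : (forall w, f w = g w) -> Ex P f = Ex P g.
Proof. by move=> h; congr (Ex P _); apply/funext. Qed.

Lemma lT_ge0 y z : 0 <= lT y z.
Proof. by rewrite /lT; case: (loss01 (hyT y) z) => ->. Qed.

Lemma lT_le1 y z : lT y z <= 1.
Proof. by rewrite /lT; case: (loss01 (hyT y) z) => ->. Qed.

Lemma lT_sq y z : lT y z ^+ 2 = lT y z.
Proof. by rewrite /lT; case: (loss01 (hyT y) z) => ->; rewrite ?expr0n ?expr1n. Qed.

Definition phif k (f g : TT -> R) (y : TT) : R := if y.1.1.2 k then f y else g y.

Lemma m_phif k f g : measurable_fun setT f -> measurable_fun setT g ->
  measurable_fun setT (phif k f g).
Proof. by move=> mf mg; apply: measurable_fun_ifT => //; exact: m_U. Qed.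

Definition phA k := phif k (fun y => lT y (y.1.1.1 k false)) (fun=> 0).
Definition phB k := phif k (fun=> 0) (fun y => lT y (y.1.1.1 k false)).
Definition phC k := phif k (fun y => lT y (y.1.1.1 k true)) (fun=> 0).
Definition phD k := phif k (fun y => lT y y.2) (fun=> 0).
Definition phE k := phif k (fun=> 0) (fun y => lT y y.2).

Lemma mZtf k j : measurable_fun setT (fun y : TT => lT y (y.1.1.1 k j)).
Proof. by apply: m_l; exact: m_Zt. Qed.

Lemma mzpf : measurable_fun setT (fun y : TT => lT y y.2).
Proof. by apply: m_l; exact: m_zp. Qed.

Lemma phif_ge0 k f g : (forall y, 0 <= f y) -> (forall y, 0 <= g y) ->
  forall y, 0 <= phif k f g y.
Proof. by move=> hf hg y; rewrite /phif; case: ifP. Qed.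

Lemma phif_le1 k f g : (forall y, `|f y| <= 1) -> (forall y, `|g y| <= 1) ->
  forall y, `|phif k f g y| <= 1.
Proof. by move=> hf hg y; rewrite /phif; case: ifP. Qed.

Lemma lT_abs y z : `|lT y z| <= 1.
Proof. by rewrite ger0_norm ?lT_ge0 ?lT_le1. Qed.

Lemma good_comp (phi : TT -> R) : measurable_fun setT phi ->
  (forall y, `|phi y| <= 1) -> good (phi \o mkX).
Proof.
move=> mphi h; split; first exact: measurableT_comp mphi mkX_meas.
by exists 1 => w; exact: h.
Qed.

Lemma hy_swU k (y : TT) : hyT (swU k y) = hyT y.
Proof.
rewrite /hyT /=; congr (A _ _); apply: eq_from_tnth => j; rewrite !tnth_mktuple /=.
by case: (eqVneq j k) => // ->; rewrite negbK.
Qed.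

Lemma hy_tau k (y : TT) : y.1.1.2 k -> hyT (tau k y) = hyT y.
Proof.
move=> Uk; rewrite /hyT /=; congr (A _ _); apply: eq_from_tnth => j; rewrite !tnth_mktuple /=.
by case: (eqVneq j k) => // ->; rewrite Uk.
Qed.

Lemma EB_C k : Ex P (phB k \o mkX) = Ex P (phC k \o mkX).
Proof.
have := @law_int R _ _ Omega TT P mkX (swU k \o mkX) mkX_meas
  (measurableT_comp (law_swU k).1 mkX_meas) (law_swU k).2 (phB k).
rewrite /Ex => ->.
- congr (Rintegral _ _ _); apply/funext => w /=.
  rewrite /phB /phC /phif /lT hy_swU /= eqxx.
  by case: (U k w).
- by rewrite /phB; apply: m_phif; [exact: measurable_cst|exact: mZtf].
- by apply: phif_ge0 => y //; exact: lT_ge0.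
Qed.

Lemma EE_D k : Ex P (phE k \o mkX) = Ex P (phD k \o mkX).
Proof.
have := @law_int R _ _ Omega TT P mkX (swU k \o mkX) mkX_meas
  (measurableT_comp (law_swU k).1 mkX_meas) (law_swU k).2 (phE k).
rewrite /Ex => ->.
- congr (Rintegral _ _ _); apply/funext => w /=.
  rewrite /phE /phD /phif /lT hy_swU /= eqxx.
  by case: (U k w).
- by rewrite /phE; apply: m_phif; [exact: measurable_cst|exact: mzpf].
- by apply: phif_ge0 => y //; exact: lT_ge0.
Qed.

Lemma ED_A k : Ex P (phD k \o mkX) = Ex P (phA k \o mkX).
Proof.
have := @law_int R _ _ Omega TT P mkX (tau k \o mkX) mkX_meas
  (measurableT_comp (law_tau k).1 mkX_meas) (law_tau k).2 (phD k).
rewrite /Ex => ->.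
- congr (Rintegral _ _ _); apply/funext => w /=.
  rewrite /phD /phA /phif /lT /=.
  by case Uk: (U k w) => //; rewrite hy_tau.
- by rewrite /phD; apply: m_phif; [exact: mzpf|exact: measurable_cst].
- by apply: phif_ge0 => y //; exact: lT_ge0.
Qed.

Lemma main (gamma C1 : R) : (0 < n)%N -> 0 < gamma < 1 -> 0 < C1 ->
  Err P A loss Zt U xi Zp - C1 * Vgamma P A loss Zt U xi gamma
  <= (2 + C1 * gamma ^+ 2) / n%:R
     * \sum_(i < n) Ex P (fun w => eps_shift U C1 gamma i w * Lplus A loss Zt U xi i w).
Proof.
move=> n0 hg hC.
have nz : n%:R != 0 :> R by rewrite pnatr_eq0 -lt0n.
pose a k := Ex P (phA k \o mkX).
pose b k := Ex P (phB k \o mkX).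
have gf k (f g : TT -> R) : measurable_fun setT f -> measurable_fun setT g ->
    (forall y, `|f y| <= 1) -> (forall y, `|g y| <= 1) -> good (phif k f g \o mkX).
  move=> mf mg hf hg'; apply: good_comp; first exact: m_phif.
  exact: phif_le1.
have n0' : forall y : TT, `|(fun=> 0 : R) y| <= 1 by move=> y; rewrite normr0.
have l1 : forall (g : TT -> Z) (y : TT), `|lT y (g y)| <= 1 by move=> g y; exact: lT_abs.
have mc0 : measurable_fun setT (fun _ : TT => (0:R)) by exact: measurable_cst.
have gA k : good (phA k \o mkX).
  exact: (gf k _ _ (mZtf k false) mc0 (l1 (fun y => y.1.1.1 k false)) n0').
have gB k : good (phB k \o mkX).
  exact: (gf k _ _ mc0 (mZtf k false) n0' (l1 (fun y => y.1.1.1 k false))).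
have gC k : good (phC k \o mkX).
  exact: (gf k _ _ (mZtf k true) mc0 (l1 (fun y => y.1.1.1 k true)) n0').
have gD k : good (phD k \o mkX).
  exact: (gf k _ _ mzpf mc0 (l1 (fun y => y.2)) n0').
have gE k : good (phE k \o mkX).
  exact: (gf k _ _ mc0 mzpf n0' (l1 (fun y => y.2))).
have hLmu k : L_mu P A loss Zt U xi Zp = 2 * a k.
  rewrite /L_mu (@Ex_ext _ (fun w => (phD k \o mkX) w + (phE k \o mkX) w)); last first.
    by move=> w; rewrite /phD /phE /phif /=; case: (U k w); rewrite ?addr0 ?add0r.
  by rewrite ExD // EE_D ED_A /a; ring.
pose lf k := fun y : TT => lT y (y.1.1.1 k (y.1.1.2 k)).
have hl k w : loss (hyp A Zt U xi w) (tnth (train Zt U w) k) = lf k (mkX w).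
  by rewrite tnth_mktuple.
have gl k : good (lf k \o mkX).
  apply: good_comp; first by apply: m_l; exact: m_trk.
  by move=> y; exact: lT_abs.
have hEl k : Ex P (lf k \o mkX) = 2 * b k.
  rewrite (@Ex_ext _ (fun w => (phB k \o mkX) w + (phC k \o mkX) w)); last first.
    by move=> w; rewrite /phB /phC /phif /lf /=; case: (U k w); rewrite ?addr0 ?add0r.
  by rewrite ExD // -EB_C /b; ring.
pose e := fun w => n%:R^-1 * \sum_(k < n) (lf k \o mkX) w.
have hLe : L_n P A loss Zt U xi = Ex P e.
  apply: Ex_ext => w; rewrite /emp_risk /e; congr (_ * _).
  by apply: eq_bigr => k _; rewrite hl.
have ge : good e by apply: goodZ; apply: goodS.
have e01 w : 0 <= e w <= 1.
  apply/andP; split.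
    rewrite /e mulr_ge0 ?invr_ge0 ?ler0n //; apply: sumr_ge0 => k _; exact: lT_ge0.
  rewrite /e ler_pdivrMl ?ltr0n // mulr1.
  apply: le_trans (_ : \sum_(k < n) (1 : R) <= _).
    by apply: ler_sum => k _; exact: lT_le1.
  by rewrite sumr_const card_ord.
have hLn : L_n P A loss Zt U xi = n%:R^-1 * (2 * \sum_(k < n) b k).
  rewrite hLe /e ExZ; last exact: goodS.
  rewrite ExS //; congr (_ * _); rewrite mulr_sumr; apply: eq_bigr => k _; exact: hEl.
have hV : gamma ^+ 2 * L_n P A loss Zt U xi <= Vgamma P A loss Zt U xi gamma.
  rewrite /Vgamma (@Ex_ext _ (fun w => e w + (gamma ^+ 2 - 1) * e w ^+ 2)); last first.
    move=> w.
    have -> : emp_risk loss (hyp A Zt U xi w) (train Zt U w) = e w.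
      rewrite /emp_risk /e; congr (_ * _).
      by apply: eq_bigr => k _; rewrite hl.
    rewrite (eq_bigr (fun k => (lf k (mkX w) - (1 + gamma) * e w) ^+ 2)); last first.
      by move=> k _; rewrite hl.
    apply: (@var_alg R n (fun k => lf k (mkX w)) gamma n0).
    by move=> k; exact: lT_sq.
  rewrite hLe -ExZ //.
  apply: Ex_le.
  - exact: goodZ.
  - apply: goodD => //; apply: goodZ.
    case: ge => me [M hM]; split; first exact: measurable_funX.
    exists (M ^+ 2) => w; rewrite normrX.
    apply: lerXn2r; rewrite ?nnegrE ?normr_ge0 ?hM //.
    exact: le_trans (normr_ge0 _) (hM w).
  - by move=> w; apply: var_ge.
pose c := C1 * gamma ^+ 2 / (C1 * gamma ^+ 2 + 2).
have hR k : Ex P (fun w => eps_shift U C1 gamma k w * Lplus A loss Zt U xi k w)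
    = (1 - c) * a k - (1 + c) * b k.
  rewrite (@Ex_ext _ (fun w => (1 - c) * (phA k \o mkX) w + (- (1 + c)) * (phB k \o mkX) w)); last first.
    move=> w; rewrite /eps_shift /Lplus /phA /phB /phif /c /=.
    by case: (U k w); rewrite /lT /hyT /=; ring.
  rewrite ExD; last by apply: goodZ.
    by rewrite !ExZ // /a /b; ring.
  exact: goodZ.
rewrite (eq_bigr (fun k => (1 - c) * a k - (1 + c) * b k)); last by move=> k _; exact: hR.
rewrite sumrB -!mulr_sumr.
have hSa : \sum_(k < n) a k = n%:R * (L_mu P A loss Zt U xi Zp / 2).
  rewrite (eq_bigr (fun=> L_mu P A loss Zt U xi Zp / 2)); last first.
    by move=> k _; rewrite (hLmu k); field.
  by rewrite sumr_const card_ord mulr_natl.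
rewrite hSa /Err.
move: hV; rewrite hLn.
set Lm := L_mu P A loss Zt U xi Zp.
set V := Vgamma P A loss Zt U xi gamma.
set Sb := \sum_(k < n) b k.
move=> hV.
have KZ : C1 * gamma ^+ 2 + 2 != 0.
  have g2 : 0 <= gamma ^+ 2 by exact: sqr_ge0.
  by rewrite gt_eqF // ltr_wpDl // mulr_ge0 // ltW.
have -> : (2 + C1 * gamma ^+ 2) / n%:R * ((1 - c) * (n%:R * (Lm / 2)) - (1 + c) * Sb)
   = Lm - (1 + C1 * gamma ^+ 2) * (n%:R^-1 * (2 * Sb)).
  by rewrite /c; field; rewrite KZ nz.
have h := ler_wpM2l (ltW hC) hV.
set L := n%:R^-1 * (2 * Sb).
rewrite (_ : Lm - (1 + C1 * gamma ^+ 2) * L = Lm - L - C1 * (gamma ^+ 2 * L)); last by ring.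
by rewrite lerD2l lerN2.
Qed.

End Main.

Theorem lemma4 (R : realType) (dO dZ dW dX : measure_display)
  (Omega : measurableType dO) (Z : measurableType dZ)
  (W : measurableType dW) (Xi : measurableType dX)
  (P : probability Omega R) (n : nat) (mu : probability Z R)
  (A : n.-tuple Z -> Xi -> W) (loss : W -> Z -> R)
  (Zt : 'I_n -> bool -> Omega -> Z) (U : 'I_n -> Omega -> bool)
  (xi : Omega -> Xi) (Zp : Omega -> Z)
  (gamma C1 : R) :
  (0 < n)%N ->
  (* loss with values in {0,1}, jointly measurable *)
  (forall h z, loss h z = 0 \/ loss h z = 1) ->
  measurable_fun setT (fun p : W * Z => loss p.1 p.2) ->
  (* (randomized) learning algorithm: measurable map of sample and randomness *)
  measurable_fun setT (fun p : n.-tuple Z * Xi => A p.1 p.2) ->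
  (* random elements *)
  (forall i j, measurable_fun setT (Zt i j)) ->
  (forall i, measurable_fun setT (U i)) ->
  measurable_fun setT xi -> measurable_fun setT Zp ->
  (* laws: Ztilde_{i,j} ~ mu, Z' ~ mu, U_i uniform on {0,1} *)
  (forall i j B, measurable B -> P (Zt i j @^-1` B) = mu B) ->
  (forall B, measurable B -> P (Zp @^-1` B) = mu B) ->
  (forall i b, P (U i @^-1` [set b]) = (2^-1)%:E) ->
  (* all of them mutually independent *)
  mutually_independent P (ss_sigma Zt U xi Zp) ->
  0 < gamma < 1 -> 0 < C1 ->
  Err P A loss Zt U xi Zp - C1 * Vgamma P A loss Zt U xi gamma
  <= (2 + C1 * gamma ^+ 2) / n%:R
     * \sum_(i < n) Ex P (fun w => eps_shift U C1 gamma i w * Lplus A loss Zt U xi i w).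
Proof.
move=> n0 l01 ml mA' mZt' mU' mxi' mZp' lZt lZp lU ind hg hC.
by apply: (@main R dO dZ dW dX Omega Z W Xi P n mu A loss Zt U xi Zp) => //.
Qed.
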